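(* Let $G$ be a finite connected graph with $\operatorname{diam}(G) = 2$. Then $\mathrm{gp_e}(G) = m(G)$, where $m(G)$ denotes the number of edges of $G$.
   Context: A geodesic in a graph is a shortest path between two vertices. A set $S$ of edges of a graph $G$ is an edge general position set if no geodesic of $G$ contains three edges of $S$. The edge general position number $\mathrm{gp_e}(G)$ is the maximum cardinality of an edge general position set of $G$. $\operatorname{diam}(G)$ is the maximum distance between two vertices of $G$. *)

(* Defs.v *)
(* A finite simple graph is a symmetric irreflexive
   relation e : rel T on a finType T. *)
From Stdlib Require Import ClassicalEpsilon.
From mathcomp Require Import all_boot.
Set Implicit Arguments. Unset Strict Implicit. Unset Printing Implicit Defensive.

Section Graph.
Variables (T : finType) (e : rel T).

Definition walkn (u v : T) (n : nat) : bool :=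
  [exists p : n.-tuple T, path e u p && (last u p == v)].

(* distance: least n < #|T| with a walk of length n (walks of length < #|T|
   suffice in a connected graph); #|T| if none *)
Definition dist (u v : T) : nat := find (walkn u v) (iota 0 #|T|).

Definition connected_graph : Prop := forall u v : T, connect e u v.

Definition diam : nat := \max_(u : T) \max_(v : T) dist u v.

Definition edges : {set {set T}} := [set [set x; y] | x in T, y in T & e x y].

Definition walk_edges (u : T) (p : seq T) : {set {set T}} :=
  [set:: pairmap (fun a b => [set a; b]) u p].

Definition geodesic (u v : T) (p : seq T) : bool :=
  path e u p && (last u p == v) && (size p == dist u v).

Definition edge_gp_set (S : {set {set T}}) : Prop :=
  S \subset edges /\
  forall (u v : T) (p : seq T), geodesic u v p -> #|S :&: walk_edges u p| < 3.

(* classical decision of the Prop edge_gp_set, to filter a finite max *)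
Definition edge_gp_setb (S : {set {set T}}) : bool :=
  if excluded_middle_informative (edge_gp_set S) then true else false.

Definition gpe : nat :=
  \max_(S : {set {set T}} | edge_gp_setb S) #|S|.
End Graph.

(* Main.v *)
Require Import Defs.
From Stdlib Require Import ClassicalEpsilon.
From mathcomp Require Import all_boot.

Theorem lemma2p1 (T : finType) (e : rel T)
  (e_sym : symmetric e) (e_irr : irreflexive e)
  (e_conn : connected_graph e) (e_diam : diam e = 2) :
  gpe e = #|edges e|.
Proof.
have Hd : forall u v, dist e u v <= 2.
  move=> u v; rewrite -e_diam /diam.
  apply: leq_trans (leq_bigmax u).
  exact: (leq_bigmax (F := fun v => dist e u v) v).
have Hgp : edge_gp_set e (edges e).
  split=> //= u v p /andP [/andP [_ _] /eqP Hs].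
  apply: (@leq_ltn_trans #|walk_edges u p|); first exact/subset_leq_card/subsetIr.
  apply: (@leq_ltn_trans (size p)); last by rewrite Hs ltnS Hd.
  rewrite /walk_edges.
  rewrite cardsE; apply: leq_trans (card_size _) _.
  by rewrite size_pairmap.
apply/eqP; rewrite eqn_leq; apply/andP; split.
  apply/bigmax_leqP => S; rewrite /edge_gp_setb.
  case: excluded_middle_informative => // [[HS _]] _.
  exact: subset_leq_card.
rewrite /gpe; apply: (leq_bigmax_cond (edges e)).
rewrite /edge_gp_setb; by case: excluded_middle_informative.
Qed.
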